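(* Let $d\ge1$ and equip $\mathbb{R}^d$ with the $\ell^\infty$-norm $|(\xi^1,\dots,\xi^d)|_\infty=\max_i|\xi^i|$. Let $C_d$ be the smallest real constant such that for every $N\ge1$, every $(\xi_1,\dots,\xi_N)\in([0,1]^d)^N$ and every continuous $f:[0,1]^d\to\mathbb{R}$, $$\Big|\int_{[0,1]^d}f(u)\,du-\frac1N\sum_{i=1}^Nf(\xi_i)\Big|\le C_d\,w\big(f,D^*_N(\xi_1,\dots,\xi_N)^{\frac1d}\big)$$ (this constant is finite, with $C_1=1$ and $C_d\in[1,4]$ for $d\ge2$). Then: (a) for every $N\ge1$ and every $(\xi_1,\dots,\xi_N)\in([0,1]^d)^N$, $$e_1\big(\{\xi_1,\dots,\xi_N\},U([0,1]^d)\big)\le C_d\,D^*_N(\xi_1,\dots,\xi_N)^{\frac1d};$$ (b) in particular, when $d=1$, $e_1\big(\{\xi_1,\dots,\xi_N\},U([0,1])\big)\le D^*_N(\xi_1,\dots,\xi_N)$.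
   Context: $U([0,1]^d)$ is the uniform distribution on $[0,1]^d$ and, for $U\sim U([0,1]^d)$ and $\Gamma\subset\mathbb{R}^d$, $e_1(\Gamma,U([0,1]^d))=\mathbb{E}\min_{a\in\Gamma}|U-a|_\infty$. The star discrepancy is $D^*_N(\xi_1,\dots,\xi_N)=\sup_{u\in[0,1]^d}\big|\frac1N\sum_{i=1}^N\mathbf{1}_{\{\xi_i\in[\![0,u]\!]\}}-\lambda_d([\![0,u]\!])\big|$ where $[\![0,u]\!]=\prod_{\ell=1}^d[0,u^\ell]$. The uniform continuity modulus is $w(f,\delta)=\sup\{|f(\xi)-f(\xi')|:\xi,\xi'\in[0,1]^d,\ |\xi-\xi'|_\infty\le\delta\}$. *)

(* Defs.v *)
From HB Require Import structures.
From mathcomp Require Import all_boot all_order all_algebra.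
From mathcomp Require Import all_classical all_reals all_analysis.
Unset Printing Implicit Defensive.
Import Order.TTheory GRing.Theory Num.Theory.
Local Open Scope classical_set_scope.
Local Open Scope ring_scope.

(* Points of R^d are d-tuples (these carry MathComp-Analysis' product
   sigma-algebra, generated by the coordinate maps). *)

Definition linf_dist {R : realType} {d : nat} (x y : d.-tuple R) : R :=
  \big[Num.max/0]_(l < d) `|tnth x l - tnth y l|.

Definition cube {R : realType} (d : nat) : set (d.-tuple R) :=
  [set x | forall l : 'I_d, 0 <= tnth x l <= 1].

Definition box0 {R : realType} {d : nat} (u : d.-tuple R) : set (d.-tuple R) :=
  [set x | forall l : 'I_d, 0 <= tnth x l <= tnth u l].

Definition vol0 {R : realType} {d : nat} (u : d.-tuple R) : R :=
  \prod_(l < d) tnth u l.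

Definition local_discrepancy {R : realType} {d N : nat} (xi : 'I_N -> d.-tuple R)
  (u : d.-tuple R) : R :=
  (N%:R)^-1 * (\sum_(i < N) (if [forall l : 'I_d, 0 <= tnth (xi i) l <= tnth u l]
                              then 1 else 0)) - vol0 u.

Definition star_discrepancy {R : realType} {d N : nat} (xi : 'I_N -> d.-tuple R) : R :=
  sup [set `|local_discrepancy xi u| | u in cube d].

Definition continuous_on_cube {R : realType} {d : nat} (f : d.-tuple R -> R) : Prop :=
  forall x, cube d x -> forall e : R, 0 < e -> exists2 delta : R, 0 < delta &
    forall y, cube d y -> linf_dist x y < delta -> `|f x - f y| < e.

Definition modulus {R : realType} {d : nat} (f : d.-tuple R -> R) (delta : R) : R :=
  sup [set (fun p : d.-tuple R * d.-tuple R => `|f p.1 - f p.2|) p | p in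
        [set p : d.-tuple R * d.-tuple R | cube d p.1 /\ cube d p.2 /\ linf_dist p.1 p.2 <= delta]].

(* mu is Lebesgue measure on [0,1]^d: it gives mass prod_l u^l to every box
   [[0,u]], u in [0,1]^d (this determines mu on the Borel subsets of [0,1]^d). *)
Definition is_lebesgue_on_cube {R : realType} {d : nat}
  (mu : {measure set (d.-tuple R) -> \bar R}) : Prop :=
  forall u, cube d u -> mu (box0 u) = (vol0 u)%:E.

Definition admissible_const {R : realType} {d : nat}
  (mu : {measure set (d.-tuple R) -> \bar R}) (c : R) : Prop :=
  forall (N : nat), (0 < N)%N -> forall xi : 'I_N -> d.-tuple R,
    (forall i, cube d (xi i)) ->
    forall f : d.-tuple R -> R, continuous_on_cube f ->
      `| Rintegral mu (cube d) f - (N%:R)^-1 * \sum_(i < N) f (xi i) |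
        <= c * modulus f (star_discrepancy xi `^ (d%:R)^-1).

Definition C_const {R : realType} {d : nat}
  (mu : {measure set (d.-tuple R) -> \bar R}) : \bar R :=
  ereal_inf [set c%:E | c in [set c : R | admissible_const mu c]].

(* e_1({xi_1..xi_N}, U([0,1]^d)) = E min_i |U - xi_i|_infty *)
Definition quant_error1 {R : realType} {d N : nat}
  (mu : {measure set (d.-tuple R) -> \bar R}) (xi : 'I_N -> d.-tuple R) : R :=
  Rintegral mu (cube d) (fun x => inf [set linf_dist x (xi i) | i in [set: 'I_N]]).

(* Main.v *)
Require Import Defs.
From HB Require Import structures.
From mathcomp Require Import all_boot all_order all_algebra.
From mathcomp Require Import all_classical all_reals all_analysis.
From mathcomp Require Import ring lra zify.
Import Order.TTheory GRing.Theory Num.Theory.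
Local Open Scope classical_set_scope.
Local Open Scope ring_scope.

Section Aux.
Context {R : realType} {d : nat}.
Implicit Types x y z : d.-tuple R.

Lemma dist_ge0 x y : 0 <= linf_dist x y.
Proof.
rewrite /linf_dist; elim/big_ind: _ => //.
by move=> a b ha hb; rewrite le_max ha.
Qed.

Lemma coord_le_dist x y l : `|tnth x l - tnth y l| <= linf_dist x y.
Proof. rewrite /linf_dist; exact: (le_bigmax _ (fun l => `|tnth x l - tnth y l|) l). Qed.

Lemma dist_le x y M : 0 <= M -> (forall l, `|tnth x l - tnth y l| <= M) ->
  linf_dist x y <= M.
Proof. by move=> M0 h; rewrite /linf_dist; apply: bigmax_le. Qed.

Lemma dist_sym x y : linf_dist x y = linf_dist y x.
Proof.
apply/le_anti/andP; split; apply: dist_le; rewrite ?dist_ge0// => l;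
  by rewrite distrC coord_le_dist.
Qed.

Lemma dist_tri x y z : linf_dist x z <= linf_dist x y + linf_dist y z.
Proof.
apply: dist_le; first by rewrite addr_ge0 // dist_ge0.
move=> l; apply: (le_trans (ler_distD (tnth y l) _ _)).
by rewrite lerD // coord_le_dist.
Qed.

Lemma dist_xx x : linf_dist x x = 0.
Proof.
apply/le_anti/andP; split; last exact: dist_ge0.
by apply: dist_le => // l; rewrite subrr normr0.
Qed.

Definition ztup : d.-tuple R := mktuple (fun _ => 0).
Definition otup : d.-tuple R := mktuple (fun _ => 1).

Lemma cube_ztup : cube d ztup.
Proof. by move=> l; rewrite tnth_mktuple lexx ler01. Qed.
Lemma cube_otup : cube d otup.
Proof. by move=> l; rewrite tnth_mktuple lexx ler01. Qed.

Lemma lip_cont (f : d.-tuple R -> R) :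
  (forall x y, `|f x - f y| <= linf_dist x y) -> continuous_on_cube f.
Proof.
move=> hf x _ e e0; exists e => // y _ hxy.
exact: le_lt_trans (hf x y) hxy.
Qed.

Lemma modulus_le (f : d.-tuple R -> R) delta :
  (forall x y, `|f x - f y| <= linf_dist x y) -> 0 <= delta ->
  modulus f delta <= delta.
Proof.
move=> hf d0; apply: ge_sup.
  exists 0, (ztup, ztup) => //=; last by rewrite subrr normr0.
  by split; [exact: cube_ztup|split; [exact: cube_ztup|rewrite dist_xx]].
move=> _ [[p1 p2] /= [_ [_ h]] <-].
exact: le_trans (hf p1 p2) h.
Qed.

Lemma modulus_ge (f : d.-tuple R -> R) delta p1 p2 :
  (forall x y, `|f x - f y| <= linf_dist x y) ->
  cube d p1 -> cube d p2 -> linf_dist p1 p2 <= delta ->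
  `|f p1 - f p2| <= modulus f delta.
Proof.
move=> hf c1 c2 h; apply: ub_le_sup.
  exists delta => _ [[q1 q2] /= [_ [_ h']] <-].
  exact: le_trans (hf q1 q2) h'.
by exists (p1, p2).
Qed.


Section Quant.
Variables (N : nat) (xi : 'I_N -> d.-tuple R).
Hypothesis hN : (0 < N)%N.
Hypothesis hxi : forall i, cube d (xi i).

Definition gq (x : d.-tuple R) : R := inf [set linf_dist x (xi i) | i in [set: 'I_N]].

Let i0 : 'I_N := Ordinal hN.

Let ne x : [set linf_dist x (xi i) | i in [set: 'I_N]] !=set0.
Proof. by exists (linf_dist x (xi i0)), i0. Qed.

Let lb x : has_lbound [set linf_dist x (xi i) | i in [set: 'I_N]].
Proof. by exists 0 => _ [i _ <-]; exact: dist_ge0. Qed.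

Lemma gq_ge0 x : 0 <= gq x.
Proof. by apply: lb_le_inf => // _ [i _ <-]; exact: dist_ge0. Qed.

Lemma gq_le x i : gq x <= linf_dist x (xi i).
Proof. by apply: ge_inf => //; exists i. Qed.

Lemma gq_lip x y : `|gq x - gq y| <= linf_dist x y.
Proof.
have H : forall a b, gq b <= gq a + linf_dist a b.
  move=> a b; apply/ler_addgt0Pr => e e0.
  have [_ [i _ <-] hi] := inf_adherent e0 (conj (ne a) (lb a)).
  apply: (le_trans (gq_le b i)).
  apply: (le_trans (dist_tri b a (xi i))).
  rewrite dist_sym; lra.
rewrite ler_norml; have := H x y; have := H y x; rewrite (dist_sym y x); lra.
Qed.

Lemma gq_xi i : gq (xi i) = 0.
Proof.
by apply/le_anti/andP; split; [rewrite -(dist_xx (xi i)) gq_le|exact: gq_ge0].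
Qed.

Definition cnt (u : d.-tuple R) : R :=
  \sum_(i < N) (if [forall l : 'I_d, 0 <= tnth (xi i) l <= tnth u l] then 1 else 0).

Lemma cnt_bound u : 0 <= cnt u <= N%:R.
Proof.
apply/andP; split.
  by rewrite /cnt; apply: sumr_ge0 => i _; case: ifP.
rewrite /cnt -[in X in _ <= X](card_ord N) -sum1_card natr_sum.
by apply: ler_sum => i _; case: ifP.
Qed.

Lemma ld_bound u : cube d u -> `|local_discrepancy xi u| <= 2.
Proof.
move=> cu; rewrite /local_discrepancy.
have hN' : (0 < N%:R :> R) by rewrite ltr0n.
have [c0 c1] := andP (cnt_bound u).
have h1 : 0 <= N%:R^-1 * cnt u <= 1.
  apply/andP; split; first by rewrite mulr_ge0 // invr_ge0 ltW.
  by rewrite ler_pdivrMl // mulr1.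
have h2 : 0 <= vol0 u <= 1.
  apply/andP; split; first by rewrite /vol0 prodr_ge0 // => l _; case/andP: (cu l).
  by apply: prodr_ile1 => l _; exact: cu.
rewrite -/(cnt u) ler_norml; move: h1 h2 => /andP[? ?] /andP[? ?]; lra.
Qed.

Lemma D_ge u : cube d u -> `|local_discrepancy xi u| <= star_discrepancy xi.
Proof.
move=> cu; apply: ub_le_sup; last by exists u.
by exists 2 => _ [v cv <-]; exact: ld_bound.
Qed.

Lemma D_ge0 : 0 <= star_discrepancy xi.
Proof. by have := @D_ge ztup cube_ztup; apply: le_trans. Qed.


Lemma D_gt0 (hd : (1 <= d)%N) : 0 < star_discrepancy xi.
Proof.
set a : R := (2 * N%:R)^-1.
have N0 : (0 < N%:R :> R) by rewrite ltr0n.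
have a0 : 0 < a by rewrite invr_gt0 mulr_gt0 // ltr0n.
have a1 : a <= 1.
  rewrite invf_le1 ?mulr_gt0 //; have : (1 <= N%:R :> R) by rewrite ler1n.
  lra.
set p : R := (d%:R)^-1.
set t := a `^ p.
have t0 : 0 <= t := powR_ge0 _ _.
have t1 : t <= 1.
  rewrite /t -(powRr0 a); apply: (ger_powR _); first by rewrite a0 a1.
  by rewrite invr_ge0 ler0n.
have td : t ^+ d = a.
  rewrite /t -powR_mulrn // -powRrM mulVf ?powRr1 ?ltW //.
  by rewrite pnatr_eq0 -lt0n.
set u : d.-tuple R := mktuple (fun _ => t).
have cu : cube d u by move=> l; rewrite tnth_mktuple t0 t1.
have vu : vol0 u = a.
  rewrite /vol0 (eq_bigr (fun _ => t)); last by move=> l _; rewrite tnth_mktuple.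
  by rewrite prodr_const card_ord td.
rewrite lt_neqAle D_ge0 andbT; apply/eqP => D0.
have := D_ge u cu; rewrite -D0 normr_le0 => /eqP.
rewrite /local_discrepancy vu -/(cnt u).
have [k ->] : exists k : nat, cnt u = k%:R.
  exists (\sum_(i < N) (if [forall l : 'I_d, 0 <= tnth (xi i) l <= tnth u l] then 1%N else 0%N)).
  by rewrite natr_sum; apply: eq_bigr => i _; case: ifP.
move/eqP; rewrite subr_eq0 => /eqP h.
have e1 : k%:R = N%:R * a by rewrite -h mulrA mulfV ?gt_eqF // mul1r.
have : (2 * k)%:R = 1 :> R.
  rewrite natrM e1 /a; field; rewrite ?gt_eqF //.
move/eqP; rewrite pnatr_eq1 => /eqP; lia.
Qed.

End Quant.


Lemma cube_meas : measurable (cube d : set (d.-tuple R)).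
Proof.
suff H : forall s : seq 'I_d,
    measurable [set x : d.-tuple R | forall l, l \in s -> 0 <= tnth x l <= 1].
  have -> : cube d = [set x : d.-tuple R | forall l, l \in enum 'I_d -> 0 <= tnth x l <= 1].
    apply/seteqP; split => x /= h l; first by move=> _; exact: h.
    by apply: h; rewrite mem_enum.
  exact: H.
elim => [|l s IH].
  have -> : [set x : d.-tuple R | forall l, l \in [::] -> 0 <= tnth x l <= 1] = setT.
    by apply/seteqP; split => x //= _ l.
  exact: measurableT.
have -> : [set x : d.-tuple R | forall l', l' \in l :: s -> 0 <= tnth x l' <= 1] =
   ((fun x : d.-tuple R => tnth x l) @^-1` `[0, 1]%classic) `&`
   [set x : d.-tuple R | forall l', l' \in s -> 0 <= tnth x l' <= 1].
  apply/seteqP; split => x /=.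
    move=> h; split; first by rewrite in_itv /=; apply: h; exact: mem_head.
    by move=> l' hl'; apply: h; rewrite in_cons hl' orbT.
  move=> [h1 h2] l'; rewrite in_cons => /orP[/eqP ->|]; last exact: h2.
  by move: h1; rewrite in_itv.
apply: measurableI => //.
have := measurable_tnth l measurableT (measurable_itv `[(0:R), 1]).
by rewrite setTI.
Qed.

Lemma Rint_le (mu : {measure set (d.-tuple R) -> \bar R}) (hmu : is_lebesgue_on_cube mu)
  (f : d.-tuple R -> R) M :
  (forall x, cube d x -> 0 <= f x <= M) -> Rintegral mu (cube d) f <= M.
Proof.
move=> hf.
have mc := cube_meas.
have mu1 : mu (cube d) = 1%:E.
  have -> : cube d = box0 otup.
    by apply/seteqP; split => x h l; have := h l; rewrite tnth_mktuple.
  rewrite hmu; last exact: cube_otup.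
  by rewrite /vol0 big1 // => l _; rewrite tnth_mktuple.
have le1 : (\int[mu]_(x in cube d) (f x)%:E <= M%:E)%E.
  have hc : (\int[mu]_(x in cube d) (cst M%:E) x = M%:E)%E.
    by rewrite integral_cst // mu1 mule1.
  have M0 : 0 <= M by case/andP: (hf _ cube_ztup) => a b; exact: le_trans a b.
  rewrite -hc ge0_integralE; last by move=> x cx; rewrite lee_fin; case/andP: (hf x cx).
  rewrite ge0_integralE; last by move=> x _; rewrite lee_fin.
  apply: ereal_sup_le => _ [h /= hh <-]; exists h => //= x.
  apply: (le_trans (hh x)); rewrite /patch; case: ifP => // hx.
  by move/set_mem: hx => hx; rewrite lee_fin; case/andP: (hf x hx).
have ge0 : (0 <= \int[mu]_(x in cube d) (f x)%:E)%E.
  by apply: integral_ge0 => x cx; rewrite lee_fin; case/andP: (hf x cx).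
rewrite /Rintegral; move: le1 ge0.
by case: (\int[mu]_(x in cube d) (f x)%:E)%E => //= r; rewrite !lee_fin.
Qed.

Lemma adm_ge0 (hd : (1 <= d)%N) (mu : {measure set (d.-tuple R) -> \bar R}) c :
  admissible_const mu c -> 0 <= c.
Proof.
move=> hc.
pose xi0 : 'I_1 -> d.-tuple R := fun _ => ztup.
pose l0 : 'I_d := Ordinal hd.
pose f := fun x : d.-tuple R => tnth x l0.
have hf : forall x y, `|f x - f y| <= linf_dist x y by move=> x y; exact: coord_le_dist.
have D1 : 1 <= star_discrepancy xi0.
  have := @D_ge 1%N xi0 (ltn0Sn 0) ztup cube_ztup.
  have -> : local_discrepancy xi0 ztup = 1.
    rewrite /local_discrepancy big_ord1.
    have -> : [forall l : 'I_d, 0 <= tnth (xi0 ord0) l <= tnth ztup l] = true.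
      by apply/forallP => l; rewrite /xi0 tnth_mktuple lexx.
    rewrite /vol0 (bigD1 l0) //= tnth_mktuple mul0r invr1 mulr1 subr0.
    done.
  by rewrite normr1.
pose delta := star_discrepancy xi0 `^ (d%:R)^-1.
have d1 : 1 <= delta.
  rewrite /delta -[leLHS](powRr0 (star_discrepancy xi0)); apply: (ler_powR D1).
  by rewrite invr_ge0 ler0n.
have w1 : 1 <= modulus f delta.
  have hd1 : linf_dist ztup otup <= delta.
    apply: le_trans d1; apply: dist_le => // l.
    by rewrite !tnth_mktuple sub0r normrN normr1.
  have := modulus_ge f delta ztup otup hf cube_ztup cube_otup hd1.
  by rewrite /f !tnth_mktuple sub0r normrN normr1.
have := hc 1%N (ltn0Sn 0) xi0 (fun _ => cube_ztup) f (lip_cont f hf).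
move/(le_trans (normr_ge0 _)); rewrite -/delta pmulr_lge0 //.
exact: lt_le_trans ltr01 w1.
Qed.

End Aux.

Lemma pt1 {R : realType} (N : nat) (x : 'I_N -> R) (hN : (0 < N)%N)
  (hx : forall i, 0 <= x i <= 1) (D v r : R)
  (hD : forall t, 0 <= t <= 1 ->
     `|N%:R^-1 * \sum_(i < N) (if 0 <= x i <= t then 1 else 0) - t| <= D)
  (hv : 0 <= v <= 1) (hr : forall i, r <= `|v - x i|) : r <= D.
Proof.
rewrite leNgt; apply/negP => Dr.
have D0 : 0 <= D by have := hD 0; rewrite lexx ler01 => /(_ isT); exact: le_trans.
pose F := fun t => N%:R^-1 * \sum_(i < N) (if 0 <= x i <= t then 1 else 0 : R).
have hn : forall i, (x i <= v - r) || (v + r <= x i).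
  by move=> i; have := hr i; rewrite leNgt ltr_distlC negb_and -!leNgt.
have N0 : (0 < N%:R :> R) by rewrite ltr0n.
have Feq : forall t1 t2, t1 <= t2 -> (forall i, (x i <= t1) || (t2 < x i)) -> F t1 = F t2.
  move=> t1 t2 t12 h; rewrite /F; congr (_ * _); apply: eq_bigr => i _.
  case/andP: (hx i) => -> _ /=.
  case/orP: (h i) => hi.
    by rewrite hi (le_trans hi t12).
  have -> : (x i <= t2) = false by rewrite leNgt hi.
  by have -> : (x i <= t1) = false by rewrite leNgt (le_lt_trans t12 hi).
have F0 : forall t, (forall i, t < x i) -> F t = 0.
  move=> t h; rewrite /F big1 ?mulr0 // => i _.
  by have -> : (0 <= x i <= t) = false by rewrite [x i <= t]leNgt h andbF.
have F1 : forall t, (forall i, x i <= t) -> F t = 1.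
  move=> t h; rewrite /F (eq_bigr (fun _ => 1)); last first.
    by move=> i _; case/andP: (hx i) => -> _; rewrite h.
  by rewrite sumr_const card_ord mulVf // gt_eqF.
set s := (r + D) / 2.
have hs1 : D < s by rewrite /s; lra.
have hs2 : s < r by rewrite /s; lra.
case/andP: hv => v0 v1.
case: (lerP 0 (v - r)) => A; case: (lerP (v + r) 1) => B.
- have e := Feq (v - r) (v + s) ltac:(lra).
  have {e} : F (v - r) = F (v + s).
    apply: e => i; case/orP: (hn i) => hi; first by rewrite hi.
    by apply/orP; right; lra.
  have h1 := hD (v - r) ltac:(apply/andP; lra).
  have h2 := hD (v + s) ltac:(apply/andP; lra).
  rewrite -/(F (v - r)) in h1; rewrite -/(F (v + s)) in h2.
  move=> e; rewrite e in h1; move: h1 h2; rewrite !ler_norml; lra.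
- have e : F (v - r) = 1.
    apply: F1 => i; case/orP: (hn i) => // hi.
    by case/andP: (hx i) => _ hi1; lra.
  have := hD (v - r) ltac:(apply/andP; lra).
  rewrite -/(F (v - r)) e ler_norml; lra.
- have e : F (v + s) = 0.
    apply: F0 => i; case/orP: (hn i) => hi; last lra.
    by case/andP: (hx i) => hi0 _; lra.
  have := hD (v + s) ltac:(apply/andP; lra).
  rewrite -/(F (v + s)) e ler_norml; lra.
- have := hn (Ordinal hN); case/andP: (hx (Ordinal hN)) => ? ?.
  case/orP => ?; lra.
Qed.

Theorem corollary7p2 (R : realType) (d : nat) (hd : (1 <= d)%N)
  (mu : {measure set (d.-tuple R) -> \bar R}) (hmu : is_lebesgue_on_cube mu) :
  forall (N : nat), (0 < N)%N -> forall xi : 'I_N -> d.-tuple R,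
    (forall i, cube d (xi i)) ->
    ((quant_error1 mu xi)%:E
       <= C_const mu * (star_discrepancy xi `^ (d%:R)^-1)%:E)%E
    /\ (d = 1%N -> quant_error1 mu xi <= star_discrepancy xi).
Proof.
move=> N hN xi hxi; split.
  set D := star_discrepancy xi; set delta := D `^ (d%:R)^-1.
  have Dp : 0 < D := @D_gt0 _ _ N xi hN hd.
  have dp : 0 < delta := powR_gt0 _ Dp.
  have q_le : forall c, admissible_const mu c -> quant_error1 mu xi / delta <= c.
    move=> c hc; have c0 := adm_ge0 hd mu c hc.
    have := hc N hN xi hxi (gq N xi) (lip_cont _ (gq_lip N xi hN)).
    rewrite big1 ?mulr0 ?subr0 => [|i _]; last exact: (gq_xi N xi hN).
    rewrite ger0_norm; last by apply: Rintegral_ge0 => x _; exact: gq_ge0.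
    move=> h; rewrite ler_pdivrMr //; apply: le_trans h _.
    by apply: (ler_wpM2l c0); apply: modulus_le (gq_lip N xi hN) (ltW dp).
  have : ((quant_error1 mu xi / delta)%:E <= C_const mu)%E.
    by apply: le_ereal_inf_tmp => _ [c hc <-]; rewrite lee_fin; exact: q_le.
  have dpE : (0 <= delta%:E)%E by rewrite lee_fin ltW.
  move/(lee_wpmul2r dpE).
  by rewrite -EFinM divfK ?gt_eqF.
move=> d1; subst d.
apply: Rint_le => // x cx; apply/andP; split; first exact: (gq_ge0 N xi hN).
pose X i := tnth (xi i) ord0.
apply: (@pt1 R N X hN) (tnth x ord0) _ _ _ _.
- by move=> i; exact: hxi i ord0.
- move=> t ht.
  have ct : cube 1 [tuple t] by move=> l; rewrite (ord1 l).
  have := D_ge N xi hN _ ct.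
  rewrite /local_discrepancy /vol0 big_ord1 /=.
  congr (`|_ * _ - _| <= _); apply: eq_bigr => i _.
  congr (if _ then _ else _); apply/forallP/idP => [h|h l]; first exact: h ord0.
  by rewrite (ord1 l).
- exact: cx ord0.
- move=> i; apply: le_trans (gq_le N xi x i) _.
  by apply: dist_le => // l; rewrite (ord1 l).
Qed.
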